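(* Let $\eta > 0$, let $\mathbf{a} \in \mathbb{R}_+^n$, $\mathbf{b} \in \mathbb{R}_+^m$ with $\mathbf{1}_n^\top\mathbf{a} = \mathbf{1}_m^\top\mathbf{b} = 1$, let $\mathcal{D} = U(\mu,\nu) = \{\boldsymbol{\Pi} \in \mathbb{R}_+^{n\times m} : \boldsymbol{\Pi}\mathbf{1}_m = \mathbf{a},\ \boldsymbol{\Pi}^\top\mathbf{1}_n = \mathbf{b}\}$, and let $\mathbf{C}_1,\ldots,\mathbf{C}_L \in \mathbb{R}^{n\times m}$. Let $$G_\eta(\boldsymbol{\Pi}) = \eta \log\left( \sum_{\ell=1}^L \exp\left( \tfrac{1}{\eta}\langle \boldsymbol{\Pi}, \mathbf{C}_\ell \rangle \right) \right)$$ and let $\boldsymbol{\Pi}^\ast \in \arg\min_{\boldsymbol{\Pi}\in\mathcal{D}} G_\eta(\boldsymbol{\Pi})$. Consider the Frank--Wolfe iteration: start from $\boldsymbol{\Pi}^{(0)} \in \mathcal{D}$, and for $t = 0, 1, 2, \ldots$ set $$\alpha_\ell^{(t)} = \frac{\exp\left(\frac{1}{\eta}\langle \boldsymbol{\Pi}^{(t)}, \mathbf{C}_\ell\rangle\right)}{\sum_{\ell'=1}^L \exp\left(\frac{1}{\eta}\langle \boldsymbol{\Pi}^{(t)}, \mathbf{C}_{\ell'}\rangle\right)}, \qquad \mathbf{M}_{\boldsymbol{\Pi}^{(t)}} = \sum_{\ell=1}^L \alpha_\ell^{(t)} \mathbf{C}_\ell = \nabla G_\eta(\boldsymbol{\Pi}^{(t)}),$$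 let $\gamma_t = 2/(t+2)$, let $\widehat{\boldsymbol{\Pi}} \in \mathcal{D}$ be an approximate solution of the linear subproblem $\min_{\boldsymbol{\Pi}\in\mathcal{D}} \langle \boldsymbol{\Pi}, \mathbf{M}_{\boldsymbol{\Pi}^{(t)}}\rangle$ with accuracy $\delta \geq 0$, i.e. $\langle \widehat{\boldsymbol{\Pi}}, \mathbf{M}_{\boldsymbol{\Pi}^{(t)}}\rangle \leq \min_{\boldsymbol{\Pi}\in\mathcal{D}} \langle \boldsymbol{\Pi}, \mathbf{M}_{\boldsymbol{\Pi}^{(t)}}\rangle + \tfrac{1}{2}\delta\gamma_t C_f$, and set $\boldsymbol{\Pi}^{(t+1)} = (1-\gamma_t)\boldsymbol{\Pi}^{(t)} + \gamma_t \widehat{\boldsymbol{\Pi}}$. Then for each $t \geq 1$, $$G_\eta(\boldsymbol{\Pi}^{(t)}) - G_\eta(\boldsymbol{\Pi}^\ast) \leq \frac{4\sigma_{\max}(\boldsymbol{\Phi}^\top\boldsymbol{\Phi})}{\eta(t+2)}(1+\delta),$$ where $\boldsymbol{\Phi} = (\mathrm{vec}(\mathbf{C}_1), \ldots, \mathrm{vec}(\mathbf{C}_L))$ (the matrix whose columns are the vectorized cost matrices) and $\sigma_{\max}(\boldsymbol{\Phi}^\top\boldsymbol{\Phi})$ is the largest eigenvalue of $\boldsymbol{\Phi}^\top\boldsymbol{\Phi}$.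
   Context: $\langle \mathbf{A}, \mathbf{B}\rangle = \sum_{i,j}A_{ij}B_{ij}$. $C_f$ denotes the curvature constant of $f = G_\eta$ on $\mathcal{D}$: $C_f = \sup \frac{2}{\gamma^2}\big(f(\boldsymbol{\Pi}') - f(\boldsymbol{\Pi}) - \langle \boldsymbol{\Pi}'-\boldsymbol{\Pi}, \nabla f(\boldsymbol{\Pi})\rangle\big)$ over $\boldsymbol{\Pi}, \widehat{\boldsymbol{\Pi}} \in \mathcal{D}$, $\gamma\in[0,1]$, $\boldsymbol{\Pi}' = \boldsymbol{\Pi} + \gamma(\widehat{\boldsymbol{\Pi}} - \boldsymbol{\Pi})$. The accuracy parameter $\delta$ is in the sense of Jaggi's approximate linear-minimization oracle for Frank--Wolfe (in practice the subproblem may be solved exactly by linear programming or approximately by the entropic-regularized Sinkhorn algorithm). *)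

(* Defs.v *)
From HB Require Import structures.
From mathcomp Require Import all_boot all_order all_algebra.
From mathcomp Require Import all_classical all_reals.
From mathcomp Require Import all_analysis.
Set Implicit Arguments. Unset Strict Implicit. Unset Printing Implicit Defensive.
Import Order.TTheory GRing.Theory Num.Theory.
Local Open Scope ring_scope.
Local Open Scope classical_set_scope.

Section OTDefs.
Variables (R : realType) (n m L : nat).

Definition frob (A B : 'M[R]_(n, m)) : R := \sum_(i < n) \sum_(j < m) A i j * B i j.

Definition transport_polytope (a : 'cV[R]_n) (b : 'cV[R]_m) : set 'M[R]_(n, m) :=
  [set P : 'M[R]_(n, m) | (forall i j, 0 <= P i j) /\ P *m const_mx 1 = a /\ P^T *m const_mx 1 = b].

Definition G_eta (eta : R) (C : 'I_L -> 'M[R]_(n, m)) (P : 'M[R]_(n, m)) : R :=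
  eta * ln (\sum_(l < L) expR (frob P (C l) / eta)).

Definition alpha_w (eta : R) (C : 'I_L -> 'M[R]_(n, m)) (P : 'M[R]_(n, m)) (l : 'I_L) : R :=
  expR (frob P (C l) / eta) / \sum_(l' < L) expR (frob P (C l') / eta).

Definition M_grad (eta : R) (C : 'I_L -> 'M[R]_(n, m)) (P : 'M[R]_(n, m)) : 'M[R]_(n, m) :=
  \sum_(l < L) alpha_w eta C P l *: C l.

(* Curvature constant C_f of f = G_eta on D (Jaggi), gamma in (0,1]. *)
Definition curvature_const (eta : R) (C : 'I_L -> 'M[R]_(n, m)) (D : set 'M[R]_(n, m)) : R :=
  sup [set x : R | exists P Ph (g : R), [/\ D P, D Ph, 0 < g, g <= 1 &
         x = 2 / g ^+ 2 * (G_eta eta C (P + g *: (Ph - P)) - G_eta eta C P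
                           - frob (P + g *: (Ph - P) - P) (M_grad eta C P))]].

Definition Phi_mx (C : 'I_L -> 'M[R]_(n, m)) : 'M[R]_(n * m, L) :=
  \matrix_(k, l) (mxvec (C l)) 0 k.

Definition largest_eigenvalue (A : 'M[R]_L) (lam : R) : Prop :=
  eigenvalue A lam /\ (forall mu : R, eigenvalue A mu -> mu <= lam).

End OTDefs.

(* Main.v *)
Require Import Defs.
From HB Require Import structures.
From mathcomp Require Import all_boot all_order all_algebra.
From mathcomp Require Import all_classical all_reals.
From mathcomp Require Import all_analysis.
From mathcomp Require Import complex.
From mathcomp Require Import ring lra.
Import Order.TTheory GRing.Theory Num.Theory.
Local Open Scope ring_scope.

Section Ray.
Local Open Scope sesquilinear_scope.
Variable R : realType.
Local Notation C := (R[i]).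
Local Notation f := (real_complex R).

Lemma fC_real (r : R) : (f r : C) \is Num.real.
Proof. by apply/complex_realP; exists r. Qed.

Lemma fC_conj (r : R) : (f r : C)^* = f r.
Proof. exact/conj_Creal/fC_real. Qed.

Lemma lecRR (a b : R) : (f a <= f b) = (a <= b).
Proof. exact: lecR. Qed.

Lemma rayleigh L (A : 'M[R]_L) (lam : R) : A^T = A ->
  (forall mu, eigenvalue A mu -> mu <= lam) ->
  forall x : 'rV[R]_L, (x *m A *m x^T) 0 0 <= lam * (x *m x^T) 0 0.
Proof.
move=> Asym Alam x.
set Ac : 'M[C]_L := map_mx f A.
have mapconj : forall p q (M : 'M[R]_(p, q)), map_mx (@Num.conj_op C) (map_mx f M) = map_mx f M.
  by move=> p q M; apply/matrixP => i j; rewrite !mxE fC_conj.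
have herm : Ac \is hermsymmx.
  apply/is_hermitianmxP; rewrite expr0 scale1r /Ac.
  by apply/matrixP => i j; rewrite !mxE fC_conj -[in LHS]Asym mxE.
have /orthomx_spectralP hE := hermitian_normalmx herm.
set P := spectralmx Ac in hE; set X := spectral_diag Ac in hE.
have PU : P \is unitarymx by exact: spectral_unitarymx.
have Punit : P \in unitmx by exact: spectral_unit.
have PPt : P *m P^t* = 1%:M by apply/unitarymxP.
have PtP : P^t* *m P = 1%:M by apply: mulmx1C.
have Xreal : X \is a realmx by exact: hermitian_spectral_diag_real.
have PA : P *m Ac = diag_mx X *m P.
  by rewrite {1}hE !mulmxA mulmxV // mul1mx.
have Xle : forall i, X 0 i <= f lam.
  move=> i.
  have /complex_realP [r Xr] : X 0 i \is Num.real by apply: (mxOverP Xreal).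
  rewrite Xr lecR; apply: Alam.
  have : eigenvalue Ac (X 0 i).
    apply/eigenvalueP; exists (row i P).
      rewrite -row_mul PA row_mul row_diag_mx -scalemxAl -rowE //.
    apply/negP => /eqP r0.
    have := congr1 (fun M => M *m P^t*) r0.
    rewrite /= -row_mul PPt mul0mx => /rowP /(_ i).
    by rewrite !mxE eqxx /= => /eqP; rewrite oner_eq0.
  rewrite Xr !eigenvalue_root_char /Ac -map_char_poly.
  by rewrite fmorph_root.
set xc : 'rV[C]_L := map_mx f x.
have xct : xc^t* = xc^T by apply/matrixP => i j; rewrite !mxE fC_conj.
have xT : xc^T = map_mx f x^T by apply/matrixP=> i j; rewrite !mxE.
have key : f ((x *m A *m x^T) 0 0) = (xc *m Ac *m xc^t*) 0 0.
  rewrite xct xT /xc /Ac -map_mxM.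
  rewrite -[RHS]/((map_mx f (x *m A) *m map_mx f x^T) 0 0) -map_mxM [RHS]mxE //.
have key2 : f ((x *m x^T) 0 0) = (xc *m xc^t*) 0 0.
  rewrite xct xT /xc.
  rewrite -[RHS]/((map_mx f x *m map_mx f x^T) 0 0) -map_mxM [RHS]mxE //.
rewrite -lecRR rmorphM /= key key2.
set y := xc *m P^t*.
have yt : P *m xc^t* = y^t*.
  by rewrite /y trmx_mul map_mxM /= trmxCK.
have e1 : (xc *m Ac *m xc^t*) = y *m diag_mx X *m y^t*.
  by rewrite {1}hE invmx_unitary // /y -yt !mulmxA.
have e2 : (xc *m xc^t*) = y *m y^t*.
  by rewrite /y -yt !mulmxA -(mulmxA xc) PtP mulmx1.
rewrite e1 e2 !mxE mulr_sumr; apply: ler_sum => i _.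
have -> : (y^t*) i 0 = (y 0 i)^* by rewrite !mxE.
rewrite mul_mx_diag mxE mulrAC [X in X <= _]mulrC.
by apply: ler_wpM2r; [exact: mul_conjC_ge0 | exact: Xle].
Qed.
End Ray.

Section Cal.
Local Open Scope classical_set_scope.
Variable R : realType.

Lemma is_derive_lin (c k x : R) : is_derive x 1 (fun g : R => c + g * k) k.
Proof.
have -> : (fun g : R => c + g * k) = cst c + (k *: id) by apply/funext => g /=; rewrite mulrC.
apply: is_derive_eq.
by rewrite add0r /GRing.scale /= mulr1.
Qed.

Lemma is_derive_expl (c k x : R) :
  is_derive x 1 (fun g : R => expR (c + g * k)) (expR (c + x * k) * k).
Proof.
have -> : (fun g : R => expR (c + g * k)) = expR \o (fun g => c + g * k) by [].
apply: is_derive_eq.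
by rewrite add0r mul1r scaler0 add0r /GRing.scale /= mulr1.
Qed.

Lemma mvt_nincr (f df : R -> R) (a b : R) : a <= b ->
  (forall x : R, is_derive x 1 f (df x)) -> (forall x, a <= x <= b -> df x <= 0) ->
  f b <= f a.
Proof.
move=> ab hd hle.
have cf := @derivable_within_continuous R R^o f `[a, b]%R (fun x _ => @ex_derive _ _ _ _ _ _ _ (hd x)).
have [c cab E] := MVT_segment ab (fun x _ => hd x) cf.
rewrite -subr_le0 E; apply: mulr_le0_ge0; last by rewrite subr_ge0.
by apply: hle; rewrite in_itv /= in cab.
Qed.
End Cal.

Section Smooth.
Variable R : realType.
Variables (L : nat) (s d : 'I_L -> R).
Hypothesis L0 : (0 < L)%N.

Let E l (g : R) := expR (s l + g * d l).
Let Z (g : R) := \sum_(l < L) E l g.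
Let Z1 (g : R) := \sum_(l < L) E l g * d l.
Let Z2 (g : R) := \sum_(l < L) E l g * (d l * d l).
Let K := \sum_(l < L) d l ^+ 2.
Let m (g : R) := Z1 g / Z g.

Let term_le_sum (F : 'I_L -> R) l : (forall k, 0 <= F k) -> F l <= \sum_(k < L) F k.
Proof.
move=> F0; rewrite (bigD1 l) //= lerDl; apply: sumr_ge0 => k _; exact: F0.
Qed.

Let Z_gt0 g : 0 < Z g.
Proof.
apply: (@lt_le_trans _ _ (E (Ordinal L0) g)); first exact: expR_gt0.
by apply: term_le_sum => k; apply: ltW; apply: expR_gt0.
Qed.

Let dE l (x : R) : is_derive x 1 (E l) (E l x * d l).
Proof. exact: is_derive_expl. Qed.

Let dZ (x : R) : is_derive x 1 Z (Z1 x).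
Proof.
have -> : Z = \sum_(l < L) E l by rewrite fct_sumE.
exact: is_derive_sum.
Qed.

Let dZ1 (x : R) : is_derive x 1 Z1 (Z2 x).
Proof.
have -> : Z1 = \sum_(l < L) (fun g => E l g * d l) by rewrite fct_sumE.
rewrite /Z2; apply: is_derive_sum => l.
apply: is_derive_eq.
rewrite /E /GRing.scale /=; ring.
Qed.

Let Zn0 (x : R) : Z x != 0. Proof. exact: lt0r_neq0. Qed.

Let dm (x : R) : is_derive x 1 m ((Z2 x * Z x - Z1 x ^+ 2) / Z x ^+ 2).
Proof.
have dV : is_derive x 1 (fun g => (Z g)^-1) (- (Z x) ^- 2 *: Z1 x).
  exact: is_deriveV (Zn0 x) (dZ x).
have -> : m = Z1 * (fun g => (Z g)^-1) by apply/funext => g.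
apply: is_derive_eq; first exact: is_deriveM.
rewrite /GRing.scale /=; field; exact: Zn0.
Qed.

Let Z2_le (x : R) : Z2 x <= K * Z x.
Proof.
rewrite /Z2 /K mulr_suml; apply: ler_sum => l _.
rewrite mulrC -expr2; apply: ler_wpM2l; first exact: sqr_ge0.
by apply: term_le_sum => k; apply: ltW; apply: expR_gt0.
Qed.

Let dm_le (x : R) : (Z2 x * Z x - Z1 x ^+ 2) / Z x ^+ 2 <= K.
Proof.
have Zp := Z_gt0 x.
rewrite ler_pdivrMr ?exprn_gt0 //.
have : Z2 x * Z x <= K * Z x ^+ 2.
  by rewrite expr2 mulrA ler_wpM2r // ltW.
have := sqr_ge0 (Z1 x); lra.
Qed.

Let chi_le (x : R) : 0 <= x -> m x - K * x <= m 0.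
Proof.
move=> x0.
have := @mvt_nincr R (fun g => m g - K * g) (fun g => (Z2 g * Z g - Z1 g ^+ 2) / Z g ^+ 2 - K) 0 x x0.
rewrite mulr0 subr0; apply.
  move=> y.
  have -> : (fun g => m g - K * g) = m - (fun g => K * g) by [].
  apply: is_derive_eq; first apply: is_deriveB; first exact: dm.
  by rewrite /GRing.scale /= mulr1.
by move=> y _; rewrite subr_le0; apply: dm_le.
Qed.

Lemma lse_smooth :
  ln (\sum_(l < L) expR (s l + d l)) <=
  ln (\sum_(l < L) expR (s l)) +
  \sum_(l < L) (expR (s l) / \sum_(k < L) expR (s k)) * d l +
  2^-1 * \sum_(l < L) d l ^+ 2.
Proof.
pose psi g := ln (Z g) - g * m 0 - 2^-1 * K * (g * g).
have dpsi : forall y : R, is_derive y 1 psi (m y - m 0 - K * y).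
  move=> y.
  have -> : psi = ((@ln R) \o Z) - (fun g => g * m 0) - (fun g => 2^-1 * K * (g * g)) by [].
  apply: is_derive_eq.
    apply: is_deriveB; first apply: is_deriveB.
    - apply: is_derive1_comp; first exact: is_derive1_ln (Z_gt0 y).
      exact: dZ.
  rewrite /GRing.scale /= [m y]/m; field; exact: Zn0.
have := @mvt_nincr R psi (fun y => m y - m 0 - K * y) 0 1 ler01 dpsi.
have H : forall y : R, 0 <= y <= 1 -> m y - m 0 - K * y <= 0.
  move=> y /andP [y0 _]; have := chi_le y y0; lra.
have e1 : Z 1 = \sum_(l < L) expR (s l + d l).
  by apply: eq_bigr => l _; rewrite /E mul1r.
have e0 : Z 0 = \sum_(l < L) expR (s l).
  by apply: eq_bigr => l _; rewrite /E mul0r addr0.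
have em : m 0 = \sum_(l < L) (expR (s l) / \sum_(k < L) expR (s k)) * d l.
  rewrite /m -e0 /Z1 mulr_suml; apply: eq_bigr => l _.
  by rewrite /E mul0r addr0 mulrAC.
move=> /(_ H); rewrite /psi e1 e0 em /K.
rewrite !mul1r !mul0r !subr0 mulr1; lra.
Qed.

End Smooth.

Lemma lse_convex (R : realType) L (s u : 'I_L -> R) : (0 < L)%N ->
  ln (\sum_(l < L) expR (s l)) +
  \sum_(l < L) (expR (s l) / \sum_(k < L) expR (s k)) * (u l - s l)
  <= ln (\sum_(l < L) expR (u l)).
Proof.
move=> L0.
set S := \sum_(k < L) expR (s k).
have Sp : 0 < S.
  rewrite /S (bigD1 (Ordinal L0)) //=; apply: ltr_pwDl; first exact: expR_gt0.
  by apply: sumr_ge0 => k _; apply: ltW; apply: expR_gt0.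
set db := \sum_(l < L) _.
have eS : \sum_(l < L) expR (s l) * (u l - s l) = S * db.
  by rewrite /db mulr_sumr; apply: eq_bigr => l _; rewrite mulrA mulrCA divff ?mulr1 // gt_eqF.
have key : S * expR db <= \sum_(l < L) expR (u l).
  have -> : S * expR db = \sum_(l < L) expR (s l) * (1 + (u l - s l - db)) * expR db.
    rewrite -mulr_suml; congr (_ * _).
    under eq_bigr do rewrite mulrDr mulr1 mulrBr mulrBr.
    rewrite big_split /= sumrB sumrB -/S.
    have -> : \sum_(l < L) expR (s l) * u l - \sum_(l < L) expR (s l) * s l = S * db.
      by rewrite -eS -sumrB; apply: eq_bigr => l _; rewrite mulrBr.
    by rewrite -mulr_suml -/S; ring.
  apply: ler_sum => l _.
  have -> : expR (u l) = expR (s l) * expR (u l - s l - db) * expR db.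
    by rewrite -!expRD; congr expR; ring.
  apply: ler_wpM2r; first exact: ltW (expR_gt0 _).
  apply: ler_wpM2l; first exact: ltW (expR_gt0 _).
  exact: expR_ge1Dx.
have := key; rewrite -ler_ln ?posrE ?mulr_gt0 ?expR_gt0 //; last first.
  rewrite (bigD1 (Ordinal L0)) //=; apply: ltr_pwDl; first exact: expR_gt0.
  by apply: sumr_ge0 => k _; apply: ltW; apply: expR_gt0.
by rewrite lnM ?posrE ?expR_gt0 // expRK.
Qed.

Section Frob.
Variables (R : realType) (n m : nat).

Lemma sum_mxvec (F : 'I_(n * m) -> R) :
  \sum_(k < n * m) F k = \sum_(i < n) \sum_(j < m) F (mxvec_index i j).
Proof.
rewrite pair_big /= (reindex (uncurry (@mxvec_index n m))) /=.
  by apply: eq_bigr => -[i j].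
exact: curry_mxvec_bij.
Qed.

Lemma frob_mxvec (A B : 'M[R]_(n, m)) :
  frob A B = \sum_(k < n * m) mxvec A 0 k * mxvec B 0 k.
Proof. by rewrite sum_mxvec /frob; apply: eq_bigr => i _; apply: eq_bigr => j _; rewrite !mxvecE. Qed.

Lemma frobDl (A B D : 'M[R]_(n, m)) : frob (A + B) D = frob A D + frob B D.
Proof.
rewrite /frob -big_split; apply: eq_bigr => i _; rewrite -big_split.
by apply: eq_bigr => j _; rewrite mxE mulrDl.
Qed.

Lemma frobZl k (A D : 'M[R]_(n, m)) : frob (k *: A) D = k * frob A D.
Proof.
rewrite /frob mulr_sumr; apply: eq_bigr => i _; rewrite mulr_sumr.
by apply: eq_bigr => j _; rewrite mxE mulrA.
Qed.

Lemma frobNl (A D : 'M[R]_(n, m)) : frob (- A) D = - frob A D.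
Proof. by rewrite -scaleN1r frobZl mulN1r. Qed.

Lemma frobBl (A B D : 'M[R]_(n, m)) : frob (A - B) D = frob A D - frob B D.
Proof. by rewrite frobDl frobNl. Qed.

Lemma frobDr (A B D : 'M[R]_(n, m)) : frob A (B + D) = frob A B + frob A D.
Proof.
rewrite /frob -big_split; apply: eq_bigr => i _; rewrite -big_split.
by apply: eq_bigr => j _; rewrite mxE mulrDr.
Qed.

Lemma frob0r (A : 'M[R]_(n, m)) : frob A 0 = 0.
Proof. by rewrite /frob big1 // => i _; rewrite big1 // => j _; rewrite mxE mulr0. Qed.

Lemma frobZr k (A D : 'M[R]_(n, m)) : frob A (k *: D) = k * frob A D.
Proof.
rewrite /frob mulr_sumr; apply: eq_bigr => i _; rewrite mulr_sumr.
by apply: eq_bigr => j _; rewrite mxE mulrCA.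
Qed.

Lemma frob_sumr L (A : 'M[R]_(n, m)) (w : 'I_L -> R) (D : 'I_L -> 'M[R]_(n, m)) :
  frob A (\sum_(l < L) w l *: D l) = \sum_(l < L) w l * frob A (D l).
Proof.
rewrite (big_morph (frob A) (frobDr A) (frob0r A)).
by apply: eq_bigr => l _; exact: frobZr.
Qed.

Lemma frobC (A B : 'M[R]_(n, m)) : frob A B = frob B A.
Proof. by apply: eq_bigr => i _; apply: eq_bigr => j _; rewrite mulrC. Qed.

Lemma frob_ge0 (A : 'M[R]_(n, m)) : 0 <= frob A A.
Proof. by apply: sumr_ge0 => i _; apply: sumr_ge0 => j _; rewrite -expr2 sqr_ge0. Qed.

End Frob.

Lemma cauchy_schwarz (R : realType) N (a b : 'I_N -> R) :
  (\sum_(k < N) a k * b k) ^+ 2 <= (\sum_(k < N) a k ^+ 2) * (\sum_(k < N) b k ^+ 2).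
Proof.
set Ab := \sum_k a k * b k; set Aa := \sum_k a k ^+ 2; set Bb := \sum_k b k ^+ 2.
have Bb0 : 0 <= Bb by apply: sumr_ge0 => k _; apply: sqr_ge0.
have [Bz|Bp] := eqVneq Bb 0.
  have bz : forall k, b k = 0.
    move=> k; apply/eqP; rewrite -sqrf_eq0; apply/eqP.
    by apply: (psumr_eq0P _ Bz) => // k' _; apply: sqr_ge0.
  have -> : Ab = 0 by rewrite /Ab big1 // => k _; rewrite bz mulr0.
  by rewrite expr0n /= mulr_ge0 // sumr_ge0 // => k _; rewrite sqr_ge0.
have Bpos : 0 < Bb by rewrite lt_def Bp Bb0.
have H : 0 <= \sum_k (a k * Bb - b k * Ab) ^+ 2 by apply: sumr_ge0 => k _; apply: sqr_ge0.
have E : \sum_k (a k * Bb - b k * Ab) ^+ 2 = Bb * (Bb * Aa - Ab ^+ 2).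
  have E1 : forall k, (a k * Bb - b k * Ab) ^+ 2 =
    Bb ^+ 2 * a k ^+ 2 + (- (2 * Bb * Ab)) * (a k * b k) + Ab ^+ 2 * b k ^+ 2.
    by move=> k; ring.
  under eq_bigr do rewrite E1.
  rewrite !big_split /= -!mulr_sumr -/Aa -/Bb -/Ab; ring.
rewrite E in H; have := pmulr_rge0 (Bb * Aa - Ab ^+ 2) Bpos; rewrite H; nra.
Qed.

Lemma frob_ray (R : realType) n m L (C : 'I_L -> 'M[R]_(n, m)) lam : (0 < L)%N ->
  largest_eigenvalue ((Phi_mx C)^T *m Phi_mx C) lam ->
  0 <= lam /\ forall V, \sum_(l < L) frob V (C l) ^+ 2 <= lam * frob V V.
Proof.
move=> L0 [_ Hmax].
set Phi := Phi_mx C.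
have Asym : (Phi^T *m Phi)^T = Phi^T *m Phi by rewrite trmx_mul trmxK.
have hR := @rayleigh R L _ lam Asym Hmax.
have quad : forall x : 'rV[R]_L, (x *m (Phi^T *m Phi) *m x^T) 0 0 =
    \sum_(k < n * m) ((Phi *m x^T) k 0) ^+ 2.
  move=> x; have -> : x *m (Phi^T *m Phi) *m x^T = (Phi *m x^T)^T *m (Phi *m x^T).
    by rewrite trmx_mul trmxK !mulmxA.
  by rewrite mxE; apply: eq_bigr => k _; rewrite mxE expr2.
have nrm : forall x : 'rV[R]_L, (x *m x^T) 0 0 = \sum_(l < L) x 0 l ^+ 2.
  by move=> x; rewrite mxE; apply: eq_bigr => l _; rewrite mxE expr2.
have lam0 : 0 <= lam.
  have := hR (const_mx 1); rewrite quad nrm.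
  under [X in _ <= _ * X]eq_bigr do rewrite mxE expr1n.
  rewrite sumr_const card_ord => H.
  have : 0 <= lam * L%:R.
    apply: le_trans H; apply: sumr_ge0 => k _; apply: sqr_ge0.
  by rewrite pmulr_lge0 // ltr0n.
split => // V.
set w : 'rV[R]_L := \row_l frob V (C l).
set y := Phi *m w^T.
set v := fun k => mxvec V 0 k.
have eW : \sum_(l < L) frob V (C l) ^+ 2 = \sum_(k < n * m) v k * y k 0.
  under [RHS]eq_bigr do rewrite mxE mulr_sumr.
  rewrite exchange_big /=; apply: eq_bigr => l _.
  rewrite expr2 {1}frob_mxvec mulr_suml; apply: eq_bigr => k _.
  by rewrite !mxE mulrA.
have eY : \sum_(k < n * m) y k 0 ^+ 2 <= lam * \sum_(l < L) frob V (C l) ^+ 2.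
  have := hR w; rewrite quad nrm.
  by under [X in _ <= _ * X]eq_bigr do rewrite mxE.
have eF : frob V V = \sum_(k < n * m) v k ^+ 2.
  by rewrite frob_mxvec; apply: eq_bigr => k _; rewrite expr2.
have CS := @cauchy_schwarz R _ v (fun k => y k 0).
rewrite -eW -eF in CS.
set W := \sum_(l < L) _ in eW eY CS *.
have W0 : 0 <= W by apply: sumr_ge0 => l _; apply: sqr_ge0.
have F0 : 0 <= frob V V by apply: frob_ge0.
have : W ^+ 2 <= frob V V * (lam * W).
  apply: le_trans CS _; apply: ler_wpM2l => //.
move=> H2.
have [Wz|Wp] := eqVneq W 0; first by rewrite Wz mulr_ge0.
have Wpos : 0 < W by rewrite lt_def Wp W0.
rewrite -(ler_pM2r Wpos); move: H2; rewrite expr2 mulrA [frob V V * lam]mulrC //.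
Qed.

Section GL.
Variables (R : realType) (n m L : nat) (eta : R) (C : 'I_L -> 'M[R]_(n, m)).
Hypothesis eta0 : 0 < eta.
Hypothesis L0 : (0 < L)%N.

Local Notation G := (G_eta eta C).
Local Notation M := (M_grad eta C).

Lemma le_of_eq (x y : R) : x = y -> x <= y. Proof. by move->. Qed.

Lemma frob_M (P Q : 'M[R]_(n, m)) :
  frob Q (M P) = \sum_(l < L) (expR (frob P (C l) / eta) /
      \sum_(k < L) expR (frob P (C k) / eta)) * frob Q (C l).
Proof. by rewrite /M_grad frob_sumr. Qed.

Lemma G_conv (P Q : 'M[R]_(n, m)) : G P + frob (Q - P) (M P) <= G Q.
Proof.
have H := @lse_convex _ _ (fun l => frob P (C l) / eta) (fun l => frob Q (C l) / eta) L0.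
have := ler_wpM2l (ltW eta0) H.
rewrite /G_eta mulrDr frob_M; congr (_ + _ <= _).
rewrite mulr_sumr; apply: eq_bigr => l _; rewrite frobBl.
rewrite mulrCA; congr (_ * _); field; by rewrite gt_eqF.
Qed.

Lemma G_smooth (P Q : 'M[R]_(n, m)) :
  G Q <= G P + frob (Q - P) (M P) + 2^-1 / eta * \sum_(l < L) frob (Q - P) (C l) ^+ 2.
Proof.
have H := @lse_smooth _ _ (fun l => frob P (C l) / eta)
   (fun l => (frob Q (C l) - frob P (C l)) / eta) L0.
have := ler_wpM2l (ltW eta0) H.
have -> : \sum_(l < L) expR (frob P (C l) / eta + (frob Q (C l) - frob P (C l)) / eta)
   = \sum_(l < L) expR (frob Q (C l) / eta).
  apply: eq_bigr => l _; congr expR; field; exact: lt0r_neq0.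
rewrite /G_eta => H'; apply: (le_trans H'); rewrite !mulrDr.
apply: lerD; first apply: lerD => //.
  apply: le_of_eq; rewrite frob_M mulr_sumr; apply: eq_bigr => l _.
  rewrite frobBl mulrCA; congr (_ * _); field; by rewrite gt_eqF.
apply: le_of_eq; rewrite !mulrA mulr_sumr mulr_sumr; apply: eq_bigr => l _.
rewrite frobBl; field; by rewrite gt_eqF.
Qed.
End GL.

Section Poly.
Variables (R : realType) (n m : nat) (a : 'cV[R]_n) (b : 'cV[R]_m).
Hypothesis suma : \sum_(i < n) a i 0 = 1.
Local Notation T := (transport_polytope a b).

Lemma T_sum P : T P -> \sum_(i < n) \sum_(j < m) P i j = 1.
Proof.
move=> [_ [ha _]]; rewrite -suma; apply: eq_bigr => i _.
by rewrite -ha mxE; apply: eq_bigr => j _; rewrite mxE mulr1.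
Qed.

Lemma T_le1 P i j : T P -> P i j <= 1.
Proof.
move=> TP; have [P0 _] := TP; rewrite -(T_sum _ TP).
apply: (@le_trans _ _ (\sum_(j0 < m) P i j0)).
  by rewrite (bigD1 j) //= lerDl; apply: sumr_ge0 => k _; apply: P0.
rewrite (bigD1 i) //= lerDl; apply: sumr_ge0 => k _; apply: sumr_ge0 => k' _; apply: P0.
Qed.

Lemma T_diam P Q : T P -> T Q -> frob (Q - P) (Q - P) <= 2.
Proof.
move=> TP TQ.
have -> : (2 : R) = \sum_(i < n) \sum_(j < m) (Q i j + P i j).
  rewrite (eq_bigr (fun i => \sum_(j < m) Q i j + \sum_(j < m) P i j)); last first.
    by move=> i _; rewrite big_split.
  by rewrite big_split /= (T_sum _ TP) (T_sum _ TQ).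
apply: ler_sum => i _; apply: ler_sum => j _; rewrite !mxE.
have := T_le1 _ i j TP; have := T_le1 _ i j TQ; have := TP.1 i j; have := TQ.1 i j.
move=> q0 p0 q1 p1; nra.
Qed.

Lemma T_conv P Q g : T P -> T Q -> 0 <= g -> g <= 1 -> T ((1 - g) *: P + g *: Q).
Proof.
move=> [P0 [Pa Pb]] [Q0 [Qa Qb]] g0 g1; split; last split.
- move=> i j; rewrite !mxE; apply: addr_ge0; apply: mulr_ge0 => //; by rewrite subr_ge0.
- by rewrite mulmxDl -!scalemxAl Pa Qa -scalerDl subrK scale1r.
- by rewrite linearD /= !linearZ /= mulmxDl -!scalemxAl Pb Qb -scalerDl subrK scale1r.
Qed.
End Poly.

Theorem proposition3 (R : realType) (n m L : nat) (eta delta : R)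
  (a : 'cV[R]_n) (b : 'cV[R]_m) (C : 'I_L -> 'M[R]_(n, m))
  (Pstar : 'M[R]_(n, m)) (Pi : nat -> 'M[R]_(n, m)) (lam : R) :
  0 < eta -> (0 < L)%N -> 0 <= delta ->
  (forall i, 0 <= a i 0) -> (forall j, 0 <= b j 0) ->
  \sum_(i < n) a i 0 = 1 -> \sum_(j < m) b j 0 = 1 ->
  transport_polytope a b Pstar ->
  (forall P, transport_polytope a b P -> G_eta eta C Pstar <= G_eta eta C P) ->
  transport_polytope a b (Pi 0%N) ->
  (forall t : nat, exists Ph : 'M[R]_(n, m),
      [/\ transport_polytope a b Ph,
          (forall P, transport_polytope a b P ->
             frob Ph (M_grad eta C (Pi t)) <=
             frob P (M_grad eta C (Pi t))
             + 2^-1 * delta * (2 / (t%:R + 2)) * curvature_const eta C (transport_polytope a b))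
        & Pi t.+1 = (1 - 2 / (t%:R + 2)) *: Pi t + (2 / (t%:R + 2)) *: Ph]) ->
  largest_eigenvalue ((Phi_mx C)^T *m Phi_mx C) lam ->
  forall t : nat, (1 <= t)%N ->
    G_eta eta C (Pi t) - G_eta eta C Pstar <= 4 * lam / (eta * (t%:R + 2)) * (1 + delta).
Proof.
move=> eta0 L0 delta0 _ _ suma _ TPs Pmin TP0 step Hlam.
set T := transport_polytope a b.
set G := G_eta eta C.
set Cf := curvature_const eta C T.
have [lam0 ray] := @frob_ray _ _ _ _ C lam L0 Hlam.
set K := 2 * lam / eta.
have K0 : 0 <= K by rewrite /K; apply: mulr_ge0; [apply: mulr_ge0 | rewrite invr_ge0 ltW].
set S := [set x : R | exists P Ph (g : R), [/\ T P, T Ph, 0 < g, g <= 1 &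
         x = 2 / g ^+ 2 * (G (P + g *: (Ph - P)) - G P
                           - frob (P + g *: (Ph - P) - P) (M_grad eta C P))]]%classic.
have Sub : forall x, S x -> x <= K.
  move=> x [P [Ph [g [TP TPh g0 g1 ->]]]].
  have := @G_smooth _ _ _ _ eta C eta0 L0 P (P + g *: (Ph - P)).
  rewrite [P + _]addrC addrK.
  under eq_bigr do rewrite frobZl exprMn.
  rewrite -mulr_sumr.
  have := ray (Ph - P); have := @T_diam _ _ _ a b suma P Ph TP TPh.
  rewrite frobZl => hD hS hG.
  set Sg := \sum_(l < L) _ in hS hG.
  set D := frob (Ph - P) (Ph - P) in hD hS.
  have gn0 : g != 0 by rewrite gt_eqF.
  have hX : G (g *: (Ph - P) + P) - G P - g * frob (Ph - P) (M_grad eta C P)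
       <= 2^-1 / eta * (g ^+ 2 * Sg) by rewrite /G; lra.
  apply: le_trans (ler_wpM2l _ hX) _.
    by apply: mulr_ge0 => //; rewrite invr_ge0 sqr_ge0.
  have -> : 2 / g ^+ 2 * (2^-1 / eta * (g ^+ 2 * Sg)) = Sg / eta.
    by field; rewrite gn0 gt_eqF.
  rewrite /K; apply: ler_wpM2r; first by rewrite invr_ge0 ltW.
  apply: le_trans hS _; rewrite mulrC; apply: ler_wpM2r => //.
have S0 : (S !=set0)%classic.
  exists 0, Pstar, Pstar, 1; split => //.
  have f0 : frob 0 (M_grad eta C Pstar) = 0.
    by rewrite /frob big1 // => i _; rewrite big1 // => j _; rewrite mxE mul0r.
  by rewrite subrr scaler0 addr0 subrr /G subrr f0 subr0 mulr0.
have hsup : has_sup S by split => //; exists K => x /Sub.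
have CfK : Cf <= K by apply: ge_sup => // x /Sub.
have descent : forall P Ph g, T P -> T Ph -> 0 < g -> g <= 1 ->
    G (P + g *: (Ph - P)) <= G P + g * frob (Ph - P) (M_grad eta C P) + g ^+ 2 / 2 * Cf.
  move=> P Ph g TP TPh g0 g1.
  have : S (2 / g ^+ 2 * (G (P + g *: (Ph - P)) - G P
                           - frob (P + g *: (Ph - P) - P) (M_grad eta C P))).
    by exists P, Ph, g.
  move=> /(sup_upper_bound hsup).
  rewrite [P + _]addrC addrK frobZl.
  have -> : sup S = Cf by [].
  set X := G _ - G P - _ => H.
  have gn0 : g != 0 by rewrite gt_eqF.
  have : X <= g ^+ 2 / 2 * Cf.
    have -> : X = g ^+ 2 / 2 * (2 / g ^+ 2 * X) by field.
    by apply: ler_wpM2l => //; apply: mulr_ge0; rewrite ?sqr_ge0 ?invr_ge0.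
  rewrite /X; lra.
have gpos : forall t : nat, 0 < 2 / (t%:R + 2) :> R.
  by move=> t; rewrite divr_gt0 // ltr_wpDl.
have gle1 : forall t : nat, 2 / (t%:R + 2) <= 1 :> R.
  by move=> t; rewrite ler_pdivrMr ?ltr_wpDl // mul1r lerDr.
have TPi : forall t, T (Pi t).
  elim => [//|t IH].
  have [Ph [TPh _ ->]] := step t.
  by apply: T_conv => //; apply: ltW.
have rec : forall t : nat, G (Pi t.+1) - G Pstar <=
    (1 - 2 / (t%:R + 2)) * (G (Pi t) - G Pstar) + (2 / (t%:R + 2)) ^+ 2 / 2 * K * (1 + delta).
  move=> t; set g := 2 / (t%:R + 2).
  have [Ph [TPh orc ePi]] := step t.
  have eq' : Pi t.+1 = Pi t + g *: (Ph - Pi t).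
    by rewrite ePi -/g; apply/matrixP => i j; rewrite !mxE; ring.
  have desc := descent (Pi t) Ph g (TPi t) TPh (gpos t) (gle1 t).
  rewrite -eq' in desc.
  have o1 := orc Pstar TPs; rewrite -/g -/Cf in o1.
  have cv := @G_conv _ _ _ _ eta C eta0 L0 (Pi t) Pstar.
  rewrite frobBl in desc; rewrite frobBl in cv.
  have g0 := ltW (gpos t).
  have o2 := ler_wpM2l g0 o1.
  have c2 : g ^+ 2 / 2 * (1 + delta) * Cf <= g ^+ 2 / 2 * (1 + delta) * K.
    apply: ler_wpM2l => //; apply: mulr_ge0; last by rewrite addr_ge0.
    by apply: mulr_ge0; rewrite ?sqr_ge0.
  have cv2 := ler_wpM2l g0 cv.
  rewrite /G in desc cv2 o2 *.
  rewrite -/g in cv2 o2; lra.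
set K' := K * (1 + delta).
have K'0 : 0 <= K' by rewrite mulr_ge0 // addr_ge0.
have main : forall t : nat, (1 <= t)%N ->
    G (Pi t) - G Pstar <= 2 * K' / (t%:R + 2).
  elim => [//|t IH] _.
  have r := rec t; rewrite -(mulrA _ K) -/K' in r.
  case: t IH r => [|t] IH r.
    move: r; rewrite add0r divff ?pnatr_eq0 // subrr mul0r add0r expr1n => r.
    apply: le_trans r _; rewrite mul1r.
    rewrite (_ : 0.+1%:R + 2 = 3 :> R); last by rewrite -natr1; ring.
    lra.
  have IH' := IH isT.
  set x := t.+1%:R in IH' r *.
  have x0 : 0 <= x by apply: ler0n.
  have -> : t.+2%:R = x + 1 by rewrite -natr1.
  apply: le_trans r _.
  have g1 : 0 <= 1 - 2 / (x + 2) by rewrite subr_ge0 ler_pdivrMr ?ltr_wpDl // mul1r lerDr.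
  apply: le_trans (lerD (ler_wpM2l g1 IH') (lexx _)) _.
  have x2 : x + 2 != 0 by rewrite gt_eqF // ltr_wpDl.
  have x3 : x + 1 + 2 != 0 by rewrite gt_eqF // ltr_wpDl // addr_ge0.
  rewrite -subr_ge0.
  have -> : 2 * K' / (x + 1 + 2) - ((1 - 2 / (x + 2)) * (2 * K' / (x + 2)) + (2 / (x + 2)) ^+ 2 / 2 * K')
       = 2 * K' / ((x + 1 + 2) * (x + 2) ^+ 2).
    field; have := ler0n R t; move=> t0.
    by apply/andP; split; apply: lt0r_neq0; lra.
  apply: divr_ge0; first lra.
  apply: mulr_ge0; first lra.
  apply: exprn_ge0; lra.
move=> t t1; apply: le_trans (main t t1) _.
rewrite le_eqVlt; apply/orP; left; apply/eqP.
rewrite /K' /K; field.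
by rewrite gt_eqF // ?ltr_wpDl // gt_eqF.
Qed.
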